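(* Let $P$ be a $k\times k$ permutation matrix and let $m$ and $n$ be relatively prime positive integers. Then there are diagonal integer matrices $D_1$ and $D_2$ of size $k\times k$ satisfying $\gcd(\det(D_1), m) = 1$, $\gcd(\det(D_2), n) = 1$, and $\det(nD_1 + mD_2P) = 1$. *)

(* Defs.v *)
From mathcomp Require Import all_boot all_order all_algebra all_fingroup.
Set Implicit Arguments.
Unset Strict Implicit.
Unset Printing Implicit Defensive.

(* Main.v *)
Require Import Defs.
From mathcomp Require Import all_boot all_order all_algebra all_fingroup.
From mathcomp Require Import ring.
Import GRing.Theory Num.Theory.
Local Open Scope ring_scope.
Set Implicit Arguments.
Unset Strict Implicit.

Definition Nmx (k : nat) (s : 'S_k) (x y : 'I_k -> int) (S : {set 'I_k}) : 'M[int]_k :=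
  \matrix_(i, j) (if i \in S then x i * (i == j)%:R + y i * (s i == j)%:R
                  else (i == j)%:R).

Definition sclosed (k : nat) (s : 'S_k) (S : {set 'I_k}) := forall j, (s j \in S) = (j \in S).

Lemma porbit_closed k (s : 'S_k) i : sclosed s (porbit s i).
Proof.
move=> j; rewrite -!eq_porbit_mem; have := porbit_perm s 1 j; rewrite expg1 => -> //.
Qed.

Lemma porbit_fix k (s : 'S_k) j : s j = j -> porbit s j = [set j].
Proof.
move=> sj; apply/setP => y; rewrite inE; apply/porbitP/eqP => [[n ->]|->].
  by rewrite permX_fix.
by exists 0%N; rewrite expg0 perm1.
Qed.

Lemma sclosedD k (s : 'S_k) S C : sclosed s S -> sclosed s C -> sclosed s (S :\: C).
Proof. by move=> hS hC j; rewrite !inE hS hC. Qed.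

Lemma sclosed_iter k (s : 'S_k) S j n : sclosed s S -> j \in S -> ((s ^+ n)%g j) \in S.
Proof.
move=> hS jS; elim: n => [|n IH]; first by rewrite expg0 perm1.
by rewrite expgSr permM hS.
Qed.

Lemma porbit_sub k (s : 'S_k) S i : sclosed s S -> i \in S -> porbit s i \subset S.
Proof.
move=> hS iS; apply/subsetP => j /porbitP [n ->]; exact: sclosed_iter.
Qed.

Lemma NmxM k (s : 'S_k) x y (S C : {set 'I_k}) : sclosed s C -> C \subset S ->
  Nmx s x y S = Nmx s x y C *m Nmx s x y (S :\: C).
Proof.
move=> hC sCS; apply/matrixP => i j; rewrite !mxE.
case iC: (i \in C).
  rewrite (subsetP sCS _ iC).
  rewrite (eq_bigr (fun l => Nmx s x y C i l * (l == j)%:R)); last first.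
    move=> l _; rewrite [Nmx _ _ _ (_ :\: _) _ _]mxE !inE.
    case lC: (l \in C) => //=.
    rewrite !mxE iC.
    have -> : (i == l) = false by apply/negP => /eqP il; rewrite -il iC in lC.
    have -> : (s i == l) = false by apply/negP => /eqP il; rewrite -il hC iC in lC.
    by rewrite !mulr0 addr0 !mul0r.
  rewrite (bigD1 j) //= big1 ?addr0.
    by rewrite !mxE iC eqxx mulr1.
  by move=> l lj; rewrite (negbTE lj) mulr0.
rewrite (bigD1 i) //= big1 ?addr0.
  by rewrite !mxE iC eqxx mul1r !inE iC.
move=> l li; by rewrite !mxE iC eq_sym (negbTE li) mul0r.
Qed.

Lemma sigC_inj k (s : 'S_k) (C : {set 'I_k}) : sclosed s C ->
  injective (fun j => if j \in C then s j else j).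
Proof.
move=> hC a b /=; case aC: (a \in C); case bC: (b \in C) => //.
- exact: perm_inj.
- by move=> h; rewrite -h hC aC in bC.
- by move=> h; rewrite h hC bC in aC.
Qed.

Definition sigC k (s : 'S_k) (C : {set 'I_k}) (hC : sclosed s C) := perm (sigC_inj hC).

Lemma sigCE k (s : 'S_k) C (hC : sclosed s C) j :
  sigC hC j = if j \in C then s j else j.
Proof. by rewrite /sigC permE. Qed.

Lemma iter_sigC k (s : 'S_k) C (hC : sclosed s C) j n : j \in C ->
  ((sigC hC ^+ n)%g j) = ((s ^+ n)%g j).
Proof.
move=> jC; elim: n => [|n IH]; first by rewrite !expg0 !perm1.
by rewrite !expgSr !permM IH sigCE sclosed_iter.
Qed.

Lemma porbits_sigC k (s : 'S_k) i (hC : sclosed s (porbit s i)) :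
  porbits (sigC hC) = porbit s i |: [set [set j] | j in ~: porbit s i].
Proof.
set C := porbit s i.
have pC : forall j, j \in C -> porbit (sigC hC) j = C.
  move=> j jC; apply/setP => z.
  have e : porbit s j = C by apply/eqP; rewrite eq_porbit_mem.
  rewrite -e.
  apply/porbitP/porbitP => [[n ->]|[n ->]]; exists n; by rewrite iter_sigC.
have pN : forall j, j \notin C -> porbit (sigC hC) j = [set j].
  by move=> j jC; apply: porbit_fix; rewrite sigCE (negbTE jC).
apply/setP => X; rewrite !inE; apply/imsetP/idP.
  move=> [j _ ->]; case jC: (j \in C).
    by rewrite pC // eqxx.
  rewrite pN ?jC //; apply/orP; right; apply/imsetP; exists j => //.
  by rewrite inE jC.
case/orP => [/eqP ->|/imsetP [j]].
  by exists i => //; rewrite pC // porbit_id.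
rewrite inE => jC ->; exists j => //; by rewrite pN.
Qed.

Lemma sign_sigC k (s : 'S_k) i (hC : sclosed s (porbit s i)) :
  (-1) ^+ (sigC hC) = (-1) ^+ (#|porbit s i|.-1) :> int.
Proof.
rewrite -signr_odd /odd_perm porbits_sigC cardsU1 card_imset; last exact: set1_inj.
have -> : porbit s i \notin [set [set j] | j in ~: porbit s i].
  apply/imsetP => -[j]; rewrite inE => jC e.
  by move: (porbit_id s i); rewrite e inE => /eqP ei; rewrite -ei porbit_id in jC.
have := cardsC (porbit s i); rewrite card_ord => e.
have L0 : (0 < #|porbit s i|)%N by apply/card_gt0P; exists i; exact: porbit_id.
rewrite -[in RHS]signr_odd; congr (_ ^+ _).
have -> : odd k = odd (#|porbit s i| + #|~: porbit s i|) by rewrite e.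
move: L0; case: #|porbit s i| => // L _ /=.
rewrite add0n oddD; by case: (odd L); case: (odd #|~: porbit s i|).
Qed.

Lemma exists_moved k (t : 'S_k) : t != 1%g -> exists j, t j != j.
Proof.
move=> ht; apply/existsP; apply: contraR ht => /existsPn H.
apply/eqP/permP => j; rewrite perm1; exact/eqP/negPn/H.
Qed.

Lemma det_cycle k (s : 'S_k) x y i :
  \det (Nmx s x y (porbit s i)) =
  \prod_(j in porbit s i) x j + (-1) ^+ (#|porbit s i|.-1) * \prod_(j in porbit s i) y j.
Proof.
have hC := porbit_closed s i.
rewrite /determinant.
case: (eqVneq (s i) i) => [si|si].
  have eC : porbit s i = [set i] by exact: porbit_fix.
  rewrite eC big_set1 big_set1 cards1 /= expr0 mul1r.
  rewrite (bigD1 1%g) //= [X in _ + X]big1 ?addr0.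
    rewrite odd_perm1 expr0 mul1r (bigD1 i) //= big1 ?mulr1.
      by rewrite mxE perm1 inE eqxx si eqxx !mulr1.
    move=> j ji; by rewrite mxE perm1 inE (negbTE ji) eqxx.
  move=> t ht; have [j hj] := exists_moved ht.
  apply/eqP; rewrite mulf_eq0; apply/orP; right; apply/prodf_eq0; exists j => //.
  rewrite mxE inE; case: (eqVneq j i) => [ji|ji] /=.
    by rewrite ji in hj *; rewrite si ![_ == t _]eq_sym (negbTE hj) !mulr0 addr0.
  by rewrite [j == _]eq_sym (negbTE hj).
have nfix : forall j, j \in porbit s i -> s j != j.
  move=> j jC; apply/eqP => sj.
  have e : porbit s j = porbit s i by apply/eqP; rewrite eq_porbit_mem.
  move: (porbit_id s i); rewrite -e porbit_fix // inE => /eqP ij.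
  by rewrite ij sj eqxx in si.
have s1 : sigC hC != 1%g.
  apply/eqP => /permP /(_ i); rewrite sigCE porbit_id perm1 => e.
  by rewrite e eqxx in si.
rewrite (bigD1 1%g) //= (bigD1 (sigC hC)) /=; last by rewrite s1.
rewrite [X in _ + (_ + X)]big1 ?addr0.
  congr (_ + _).
    rewrite odd_perm1 expr0 mul1r [RHS]big_mkcond; apply: eq_bigr => j _.
    rewrite mxE perm1 eqxx; case jC: (j \in porbit s i) => //.
    by rewrite (negbTE (nfix j jC)) mulr0 addr0 mulr1.
  rewrite sign_sigC; congr (_ * _).
  rewrite [RHS]big_mkcond; apply: eq_bigr => j _.
  rewrite mxE sigCE; case jC: (j \in porbit s i) => //.
    by rewrite eq_sym (negbTE (nfix j jC)) mulr0 add0r eqxx mulr1.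
  by rewrite eqxx.
move=> t /andP [ht1 ht2].
apply/eqP; rewrite mulf_eq0; apply/orP; right.
apply/negPn/negP => /prodf_neq0 H.
have hout : forall j, j \notin porbit s i -> t j = j.
  move=> j jC; move: (H j isT); rewrite mxE (negbTE jC).
  move=> h; apply/esym/eqP; move: h; case: (j == t j) => //=; rewrite eqxx.
have hin : forall j, j \in porbit s i -> (t j == j) || (t j == s j).
  move=> j jC; move: (H j isT); rewrite mxE jC.
  by rewrite ![_ == t j]eq_sym; case: (t j == j); case: (t j == s j); rewrite ?mulr0 ?addr0.
have [j0 hj0] := exists_moved ht1.
have j0C : j0 \in porbit s i by apply: contraR hj0 => /hout ->.
have tj0 : t j0 = s j0 by move: (hin j0 j0C); rewrite (negbTE hj0) => /eqP.
have [j1 hj1] : exists j1, t j1 != sigC hC j1.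
  apply/existsP; apply: contraR ht2 => /existsPn HH.
  apply/eqP/permP => j; exact/eqP/negPn/HH.
have j1C : j1 \in porbit s i.
  by apply: contraR hj1 => jC; rewrite sigCE (negbTE jC) hout.
rewrite sigCE j1C in hj1.
have claim : forall n, t ((s ^+ n)%g j0) = s ((s ^+ n)%g j0).
  elim=> [|n IH]; first by rewrite expg0 perm1.
  rewrite expgSr permM.
  set z := (s ^+ n)%g j0 in IH *.
  have zC : z \in porbit s i by apply: sclosed_iter.
  have szC : s z \in porbit s i by rewrite hC.
  case/orP: (hin _ szC) => /eqP // e.
  have : t (s z) = t z by rewrite e IH.
  by move/perm_inj => e2; move: (nfix z zC); rewrite e2 eqxx.
have : j1 \in porbit s j0.
  have -> : porbit s j0 = porbit s i by apply/eqP; rewrite eq_porbit_mem.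
  exact: j1C.
case/porbitP => n e.
by move: hj1; rewrite e claim eqxx.
Qed.

Lemma coprimez1 (m : int) : coprimez 1 m.
Proof. by apply/coprimezP; exists (1, 0); rewrite /= mul0r addr0 mulr1. Qed.

Lemma PoszX (n L : nat) : (n%:Z) ^+ L = (n ^ L)%N%:Z.
Proof. by rewrite -!natz natrX. Qed.

Lemma bezout_L (m n L : nat) : coprime m n -> (0 < L)%N ->
  exists al be : int, [/\ coprimez al m, coprimez be n &
     n%:Z ^+ L * al + (-1) ^+ L.-1 * (m%:Z ^+ L * be) = 1].
Proof.
move=> hmn L0.
have cop : coprimez (n%:Z ^+ L) (m%:Z ^+ L).
  rewrite !PoszX /coprimez /gcdz /=.
  change (coprime (n ^ L) (m ^ L)); apply: coprimeXl; rewrite coprime_sym; exact: coprimeXl.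
have [u [v e]] := Bezoutz (n%:Z ^+ L) (m%:Z ^+ L).
move: e; rewrite (eqP cop) => e.
case: L L0 cop e => // L _ _ e /=.
have sg : (-1) ^+ L * (-1) ^+ L = 1 :> int by rewrite -exprMn mulrNN mulr1 expr1n.
exists u, ((-1) ^+ L * v); split.
- apply/coprimezP; exists (n%:Z ^+ L.+1, v * m%:Z ^+ L) => /=.
  rewrite -[RHS]e !exprSr; ring.
- apply/coprimezP; exists ((-1) ^+ L * m%:Z ^+ L.+1, u * n%:Z ^+ L) => /=.
  rewrite -[RHS]e.
  transitivity (u * n%:Z ^+ L.+1 + v * m%:Z ^+ L.+1 * ((-1) ^+ L * (-1) ^+ L)).
    rewrite !exprSr; ring.
  by rewrite sg mulr1.
- rewrite -[RHS]e.
  transitivity (u * n%:Z ^+ L.+1 + v * m%:Z ^+ L.+1 * ((-1) ^+ L * (-1) ^+ L)).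
    ring.
  by rewrite sg mulr1.
Qed.

Lemma Nmx_eq k (s : 'S_k) x y x' y' (S : {set 'I_k}) :
  (forall j, j \in S -> x j = x' j /\ y j = y' j) -> Nmx s x y S = Nmx s x' y' S.
Proof.
move=> h; apply/matrixP => i j; rewrite !mxE.
by case iS: (i \in S) => //; have [-> ->] := h i iS.
Qed.

Lemma main_ind k (s : 'S_k) (m n : nat) : coprime m n -> forall S, sclosed s S ->
  exists a b : 'I_k -> int, [/\ (forall j, coprimez (a j) m), (forall j, coprimez (b j) n) &
   \det (Nmx s (fun j => n%:Z * a j) (fun j => m%:Z * b j) S) = 1].
Proof.
move=> hmn.
suff H : forall c (S : {set 'I_k}), (#|S| < c)%N -> sclosed s S ->
  exists a b : 'I_k -> int, [/\ (forall j, coprimez (a j) m), (forall j, coprimez (b j) n) &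
   \det (Nmx s (fun j => n%:Z * a j) (fun j => m%:Z * b j) S) = 1].
  by move=> S; apply: (H #|S|.+1).
elim=> [//|c IH] S hc hS.
case: (set_0Vmem S) => [->|[i iS]].
  exists (fun _ => 1), (fun _ => 1); split => // [j|j|]; rewrite ?coprimez1 //.
  have -> : Nmx s (fun=> n%:Z * 1) (fun=> m%:Z * 1) set0 = 1%:M.
    by apply/matrixP => a b; rewrite !mxE inE.
  exact: det1.
set C := porbit s i.
have hC : sclosed s C := porbit_closed s i.
have sCS : C \subset S := porbit_sub hS iS.
have iC : i \in C := porbit_id s i.
have hS' : sclosed s (S :\: C) := sclosedD hS hC.
have lt : (#|S :\: C| < c)%N.
  rewrite -ltnS; apply: leq_trans hc; rewrite ltnS; apply: proper_card.
  apply/properP; split; first exact: subsetDl.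
  by exists i => //; rewrite inE iC.
have [a' [b' [ha hb hd]]] := IH _ lt hS'.
have L0 : (0 < #|C|)%N by apply/card_gt0P; exists i.
have [al [be [hal hbe he]]] := bezout_L hmn L0.
pose a j := if j \in C then (if j == i then al else 1) else a' j.
pose b j := if j \in C then (if j == i then be else 1) else b' j.
exists a, b; split.
- by move=> j; rewrite /a; case: (j \in C); [case: (j == i); rewrite ?coprimez1|].
- by move=> j; rewrite /b; case: (j \in C); [case: (j == i); rewrite ?coprimez1|].
rewrite (NmxM _ _ hC sCS) det_mulmx.
rewrite (@Nmx_eq _ _ _ _ (fun j => n%:Z * a' j) (fun j => m%:Z * b' j) (S :\: C)); last first.
  by move=> j; rewrite inE => /andP [jC _]; rewrite /a /b (negbTE jC).
rewrite hd mulr1 det_cycle -/C.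
have pa : \prod_(j in C) a j = al.
  rewrite (bigD1 i) //= big1 ?mulr1; first by rewrite /a iC eqxx.
  by move=> j /andP [jC ji]; rewrite /a jC (negbTE ji).
have pb : \prod_(j in C) b j = be.
  rewrite (bigD1 i) //= big1 ?mulr1; first by rewrite /b iC eqxx.
  by move=> j /andP [jC ji]; rewrite /b jC (negbTE ji).
by rewrite !big_split /= !prodr_const pa pb.
Qed.

Lemma coprimez_prod k (a : 'I_k -> int) (m : int) :
  (forall j, coprimez (a j) m) -> coprimez (\prod_j a j) m.
Proof.
move=> h; apply: (big_ind (fun z => coprimez z m)) => //.
- exact: coprimez1.
- by move=> u v hu hv; rewrite coprimezMl hu hv.
Qed.

Unset Implicit Arguments.

Theorem lemma3p5 (k : nat) (s : 'S_k) (m n : nat)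
    (hm : (0 < m)%N) (hn : (0 < n)%N) (hmn : coprime m n) :
  exists d1 d2 : 'rV[int]_k,
    [/\ gcdz (\det (diag_mx d1)) m%:Z = 1,
        gcdz (\det (diag_mx d2)) n%:Z = 1 &
        \det (n%:Z *: diag_mx d1 + m%:Z *: (diag_mx d2 *m perm_mx s)) = 1].
Proof.
have hT : sclosed s [set: 'I_k] by move=> j; rewrite !inE.
have [a [b [ha hb hd]]] := main_ind hmn hT.
exists (\row_j a j), (\row_j b j); split.
- apply/eqP; rewrite det_diag; under eq_bigr do rewrite mxE.
  exact: coprimez_prod.
- apply/eqP; rewrite det_diag; under eq_bigr do rewrite mxE.
  exact: coprimez_prod.
rewrite -[RHS]hd; congr (\det _).
apply/matrixP => i j; rewrite mul_diag_mx !mxE inE.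
case: (i == j); case: (s i == j); rewrite /= ?mulr0 ?mulr1 ?addr0 ?add0r //.
Qed.
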